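(* Let $X$ be a real Hilbert space, $A,B\colon X\rightrightarrows X$ maximally monotone, $D:=\operatorname{dom}A-\operatorname{dom}B$, $R:=\operatorname{ran}A+\operatorname{ran}B$, $v_D:=P_{\overline D}(0)$, $v_R:=P_{\overline R}(0)$. Then: (i) $v_D\in(-\operatorname{rec}\overline{\operatorname{dom}}A)^\ominus\cap(\operatorname{rec}\overline{\operatorname{dom}}B)^\ominus=(-(\operatorname{rec}\overline{\operatorname{dom}}A)^\ominus)\cap(\operatorname{rec}\overline{\operatorname{dom}}B)^\ominus$; (ii) $v_D\in(-\operatorname{rec}\overline{\operatorname{ran}}A)\cap\operatorname{rec}\overline{\operatorname{ran}}B$; (iii) $v_R\in(-\operatorname{rec}\overline{\operatorname{ran}}A)^\ominus\cap(-\operatorname{rec}\overline{\operatorname{ran}}B)^\ominus=-\big((\operatorname{rec}\overline{\operatorname{ran}}A)^\ominus\cap(\operatorname{rec}\overline{\operatorname{ran}}B)^\ominus\big)$; (iv) $v_R\in(-\operatorname{rec}\overline{\operatorname{dom}}A)\cap(-\operatorname{rec}\overline{\operatorname{dom}}B)=-(\operatorname{rec}\overline{\operatorname{dom}}A\cap\operatorname{rec}\overline{\operatorname{dom}}B)$; (v) $\langle v_D,v_R\rangle=0$; (vi) $v_D+v_R\in\overline D\cap\overline R$. Moreover, let $T:=\operatorname{Id}-J_A+J_BR_A$, $v:=P_{\overline{\operatorname{ran}}(\operatorname{Id}-T)}(0)$, and assume $\overline{\operatorname{ran}}(\operatorname{Id}-T)=\overline{D\cap R}=\overline D\cap\overline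 R$. Then (vii) $v=v_D+v_R$ and (viii) $\|v\|^2=\|v_D\|^2+\|v_R\|^2=\|(v_R,v_D)\|^2$.
   Context: $J_C:=(\operatorname{Id}+C)^{-1}$, $R_C:=2J_C-\operatorname{Id}$. $P_S$ is the projection onto a nonempty closed convex set $S$ (the sets $\overline D,\overline R$ are closed convex). $\overline{\operatorname{dom}}A$, $\overline{\operatorname{ran}}A$ are the closures of domain and range (closed convex sets). $\operatorname{rec}C:=\{d: C+d\subseteq C\}$ is the recession cone of a convex set $C$; for a set $S$, $S^\ominus:=\{u\in X:\langle u,s\rangle\le0\ \forall s\in S\}$ is the polar cone. $\|(v_R,v_D)\|$ is the norm in $X\times X$. *)

(* Defs.v *)
From HB Require Import structures.
From mathcomp Require Import all_boot all_order all_algebra.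
From mathcomp Require Import all_classical all_reals all_analysis.
Set Implicit Arguments. Unset Strict Implicit. Unset Printing Implicit Defensive.
Import Order.TTheory GRing.Theory Num.Theory.
Import numFieldNormedType.Exports.
Local Open Scope classical_set_scope.
Local Open Scope ring_scope.

Section Defs.
Variables (R : realType) (X : normedModType R).

(* ip is an inner product inducing the norm of X: symmetric, linear in the
   first argument, and <x,x> = |x|^2. With X complete this makes X a real
   Hilbert space. *)
Definition is_inner_product (ip : X -> X -> R) : Prop :=
  [/\ (forall x y, ip x y = ip y x),
      (forall a x y z, ip (a *: x + y) z = a * ip x z + ip y z)
    & (forall x, ip x x = `|x| ^+ 2)].

Definition op_graph (A : X -> set X) : set (X * X) := [set p | A p.1 p.2].
Definition op_dom (A : X -> set X) : set X := [set x | exists u, A x u].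
Definition op_ran (A : X -> set X) : set X := [set u | exists x, A x u].

Definition monotone_op (ip : X -> X -> R) (A : X -> set X) : Prop :=
  forall x y u v, A x u -> A y v -> 0 <= ip (x - y) (u - v).

Definition maximally_monotone (ip : X -> X -> R) (A : X -> set X) : Prop :=
  monotone_op ip A /\
  forall B : X -> set X, monotone_op ip B -> op_graph A `<=` op_graph B ->
    op_graph B = op_graph A.

(* resolvent J_A = (Id + A)^{-1}: J_A x is a p with x ∈ p + A p
   (single-valued and everywhere defined for maximally monotone A). *)
Definition resolvent (A : X -> set X) (x : X) : X :=
  xget x [set p | A p (x - p)].
Definition reflected (A : X -> set X) (x : X) : X :=
  2%:R *: resolvent A x - x.

(* projection P_S x: a nearest point of S to x (unique for S nonempty
   closed convex) *)
Definition proj_on (S : set X) (x : X) : X :=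
  xget x [set p | S p /\ forall s, S s -> `|x - p| <= `|x - s|].

Definition mink_sum (S T : set X) : set X :=
  [set z | exists a b, S a /\ T b /\ z = a + b].
Definition mink_diff (S T : set X) : set X :=
  [set z | exists a b, S a /\ T b /\ z = a - b].
Definition setneg (S : set X) : set X := [set z | S (- z)].

Definition rec_cone (C : set X) : set X := [set d | forall c, C c -> C (c + d)].
Definition polar_cone (ip : X -> X -> R) (S : set X) : set X :=
  [set u | forall s, S s -> ip u s <= 0].

Definition pair_norm2 (ip : X -> X -> R) (p : X * X) : R :=
  ip p.1 p.1 + ip p.2 p.2.

End Defs.

(* Main.v *)
Require Import Defs.
From HB Require Import structures.
From mathcomp Require Import all_boot all_order all_algebra.
From mathcomp Require Import all_classical all_reals all_analysis.
From mathcomp Require Import ring lra.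
Import Order.TTheory GRing.Theory Num.Theory.
Import numFieldNormedType.Exports.
Local Open Scope classical_set_scope.
Local Open Scope ring_scope.

Definition einv (R : realType) (n : nat) : R := n.+1%:R^-1.

Section All.
Variables (R : realType) (X : completeNormedModType R) (ip : X -> X -> R).
Hypothesis Hip : is_inner_product ip.


Lemma small_t (a b : R) : (forall t, 0 < t -> t <= 1 -> 0 <= a + t * b) -> 0 <= a.
Proof.
move=> H; rewrite leNgt; apply/negP => ha.
have hb : 0 <= b.
  have := H 1 ltr01 (lexx _); lra.
pose t := Num.min 1 ((- a) / (2 * (b + 1))).
have hb1 : 0 < 2 * (b + 1) by lra.
have h1 : 0 < (- a) / (2 * (b + 1)) by apply: divr_gt0; lra.
have t0 : 0 < t by rewrite lt_min ltr01 h1.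
have t1 : t <= 1 by rewrite ge_min lexx.
have t2 : t <= (- a) / (2 * (b + 1)) by rewrite ge_min lexx orbT.
have t3 : t * (2 * (b + 1)) <= - a by rewrite -ler_pdivlMr.
have := H t t0 t1. nra.
Qed.

Lemma arch_le0 (t c : R) : (forall n : nat, n%:R * t <= c) -> t <= 0.
Proof.
move=> H; rewrite leNgt; apply/negP => ht.
have h0 : 0 <= `|c| / t by apply: divr_ge0 => //; exact: ltW.
have hn := archi_boundP h0.
have := H (Num.Def.archi_bound (`|c| / t)).
have : `|c| < (Num.Def.archi_bound (`|c| / t))%:R * t by rewrite -ltr_pdivrMr.
have := ler_norm c. lra.
Qed.

Lemma small_lambda (K1 K2 e : R) : 0 <= K1 -> 0 <= K2 -> 0 < e ->
  exists2 l, 0 < l & forall t, 0 <= t -> t ^+ 2 <= l * (K1 * t + K2) -> t < e.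
Proof.
move=> h1 h2 he.
pose l := Num.min (e / (2 * (K1 + 1))) (e ^+ 2 / (4 * (K2 + 1))).
have a1 : 0 < e / (2 * (K1 + 1)) by apply: divr_gt0; lra.
have a2 : 0 < e ^+ 2 / (4 * (K2 + 1)) by apply: divr_gt0; [exact: exprn_gt0|lra].
exists l; first by rewrite lt_min a1 a2.
move=> t t0 ht.
have l1 : l * (2 * (K1 + 1)) <= e.
  rewrite -ler_pdivlMr; last lra. by rewrite ge_min lexx.
have l2 : l * (4 * (K2 + 1)) <= e ^+ 2.
  rewrite -ler_pdivlMr; last lra. by rewrite ge_min lexx orbT.
have l0 : 0 < l by rewrite lt_min a1 a2.
rewrite ltNge; apply/negP => het.
have b1 : l * K1 * t <= e / 2 * t.
  apply: ler_wpM2r => //; nra.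
have b2 : l * K2 < e ^+ 2 / 2 by nra.
nra.
Qed.


Lemma ipC x y : ip x y = ip y x.
Proof. by case: Hip. Qed.
Lemma ipn x : ip x x = `|x| ^+ 2.
Proof. by case: Hip. Qed.
Lemma ipDl x y z : ip (x + y) z = ip x z + ip y z.
Proof. have [_ H _] := Hip. by have := H 1 x y z; rewrite scale1r mul1r. Qed.
Lemma ipZl a x z : ip (a *: x) z = a * ip x z.
Proof.
have [_ H _] := Hip. have := H a x 0 z; rewrite addr0 => ->.
have : ip 0 z = 0 by have := H 1 0 0 z; rewrite scale1r addr0 mul1r; lra.
by move=> ->; rewrite addr0.
Qed.
Lemma ip0l z : ip 0 z = 0.
Proof. by rewrite -(scale0r 0) ipZl mul0r. Qed.
Lemma ipNl x z : ip (- x) z = - ip x z.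
Proof. by rewrite -scaleN1r ipZl mulN1r. Qed.
Lemma ipDr x y z : ip z (x + y) = ip z x + ip z y.
Proof. by rewrite ipC ipDl ![ip _ z]ipC. Qed.
Lemma ipZr a x z : ip z (a *: x) = a * ip z x.
Proof. by rewrite ipC ipZl ipC. Qed.
Lemma ipNr x z : ip z (- x) = - ip z x.
Proof. by rewrite ipC ipNl ipC. Qed.
Lemma ip0r z : ip z 0 = 0.
Proof. by rewrite ipC ip0l. Qed.

Definition ipE := (ipDl, ipDr, ipZl, ipZr, ipNl, ipNr, ip0l, ip0r).

Lemma ip_le_norm x y : ip x y <= `|x| * `|y|.
Proof.
have H : 0 <= ip (`|y| *: x - `|x| *: y) (`|y| *: x - `|x| *: y).
  by rewrite ipn exprn_ge0.
move: H; rewrite !ipE !ipn (ipC y x).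
set P := `|x| * `|y|.
have P0 : 0 <= P by rewrite mulr_ge0.
move=> H.
have H2 : P * ip x y <= P * P.
  move: H; rewrite /P; set a := `|x|; set b := `|y|; set c := ip x y. 
  clearbody a b c; move=> h; nra.
case: (ltrP 0 P) => hP.
  by rewrite -(ler_pM2l hP).
have P00 : P = 0 by apply/le_anti; rewrite hP P0.
move: P00 => /eqP; rewrite mulf_eq0 !normr_eq0 => /orP[] /eqP ->.
  by rewrite ip0l.
by rewrite ip0r.
Qed.

Lemma CS x y : `|ip x y| <= `|x| * `|y|.
Proof.
rewrite ler_norml ip_le_norm andbT.
have := ip_le_norm (- x) y; rewrite ipNl normrN; lra.
Qed.

Lemma ip_cvgl (u : nat -> X) (l v : X) : u @ \oo --> l ->
  (fun n => ip (u n) v) @ \oo --> ip l v.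
Proof.
move=> /cvgrPdist_lt H; apply/cvgrPdist_lt => e e0.
have e1 : 0 < e / (`|v| + 1) by apply: divr_gt0 => //; rewrite ltr_wpDl.
apply: filterS (H _ e1) => n hn.
rewrite -ipNl -ipDl.
apply: (le_lt_trans (CS _ _)).
rewrite ltr_pdivlMr ?ltr_wpDl // in hn.
have h0 : 0 <= `|l - u n| by [].
have : `|l - u n| * `|v| <= `|l - u n| * (`|v| + 1) by rewrite ler_wpM2l // lerDl.
move: hn; lra.
Qed.

Lemma ip_cvgr (u : nat -> X) (l v : X) : u @ \oo --> l ->
  (fun n => ip v (u n)) @ \oo --> ip v l.
Proof.
move=> H; rewrite ipC; under eq_fun do rewrite ipC; exact: ip_cvgl.
Qed.

Lemma norm2_cvg (u : nat -> X) (l : X) : u @ \oo --> l ->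
  (fun n => `|u n| ^+ 2) @ \oo --> `|l| ^+ 2.
Proof.
move=> H; rewrite expr2; under eq_fun do rewrite expr2.
by apply: cvgM; exact: cvg_norm.
Qed.


Lemma closureN (S : set X) x : closure S x <-> forall e, 0 < e -> exists s, S s /\ `|x - s| < e.
Proof.
split.
  move=> H e e0; have [s [Ss Bs]] := H _ (nbhsx_ballx x e e0).
  by exists s; split => //; move: Bs; rewrite -ball_normE.
move=> H B /nbhs_ballP [e e0 HB].
have [s [Ss hs]] := H e e0; exists s; split => //; apply: HB.
by rewrite -ball_normE.
Qed.

Lemma inv_small (d : R) : 0 < d -> exists N : nat, forall n : nat, (N <= n)%N -> einv R n < d.
Proof.
move=> d0.
have h0 : 0 <= 1 / d by apply: divr_ge0 => //; exact: ltW.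
have hN := archi_boundP h0.
exists (Num.Def.archi_bound (1 / d)) => n hn.
have h1 : ((Num.Def.archi_bound (1 / d))%:R <= n.+1%:R :> R).
  by rewrite ler_nat; apply: (leq_trans hn).
rewrite /einv -[_^-1]mul1r ltr_pdivrMr ?ltr0Sn //.
move: hN; rewrite ltr_pdivrMr // => hN.
have : (Num.Def.archi_bound (1 / d))%:R * d <= n.+1%:R * d by rewrite ler_wpM2r // ltW.
lra.
Qed.

Lemma near_inv (d : R) : 0 < d -> \forall n \near \oo, einv R n < d.
Proof.
move=> /inv_small [N HN]; apply: filterS (nbhs_infty_ge N) => n; exact: HN.
Qed.

Lemma near_ex2 [P Q : set nat] : (\forall n \near \oo, P n) -> (\forall n \near \oo, Q n) ->
  exists n, P n /\ Q n.
Proof. move=> HP HQ; have [n [? ?]] := filter_ex (filterI HP HQ); by exists n. Qed.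

Lemma lim_le_inv (f : nat -> R) L c : f @ \oo --> L ->
  (forall n, f n <= c + einv R n) -> L <= c.
Proof.
move=> /cvgrPdist_lt H Hf; rewrite leNgt; apply/negP => h.
have e0 : 0 < (L - c) / 2 by apply: divr_gt0 => //; lra.
have [n [h1 h2]] := near_ex2 (H _ e0) (near_inv _ e0).
have := Hf n; have := ler_norm (L - f n) => a b.
lra.
Qed.

Lemma cauchy_seq (u : nat -> X) (C : R) : 0 <= C ->
  (forall n k, `|u n - u k| ^+ 2 <= C * (einv R n + einv R k)) ->
  cvg (u @ \oo).
Proof.
move=> C0 H; apply: cauchy_cvg; apply: cauchy_exP => e e0.
have d0 : 0 < e ^+ 2 / (2 * C + 1) by apply: divr_gt0; [exact: exprn_gt0|lra].
have [N HN] := inv_small _ d0.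
exists (u N); apply: filterS (nbhs_infty_ge N) => n hn.
rewrite /= -ball_normE /=.
have h1 := HN N (leqnn N); have h2 := HN n hn.
have h3 := H N n.
have i1 : 0 <= einv R N by rewrite /einv invr_ge0 ler0n.
have i2 : 0 <= einv R n by rewrite /einv invr_ge0 ler0n.
have h4 : C * (einv R N + einv R n) <= C * (2 * (e ^+ 2 / (2 * C + 1))).
  apply: ler_wpM2l => //; lra.
have h5 : C * (2 * (e ^+ 2 / (2 * C + 1))) < e ^+ 2.
  have hq : e ^+ 2 / (2 * C + 1) * (2 * C + 1) = e ^+ 2.
    by rewrite divfK //; rewrite gt_eqF //; lra.
  move: hq d0; set q := e ^+ 2 / (2 * C + 1); move=> hq d0; nra.
have h6 : `|u N - u n| ^+ 2 < e ^+ 2 by lra.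
rewrite ltNge; apply/negP => h7.
move: h6 h7; set a := `|u N - u n|; move=> h6 h7; nra.
Qed.



Definition convex_set (S : set X) := forall a b (t : R), S a -> S b -> 0 <= t -> t <= 1 ->
  S (t *: a + (1 - t) *: b).

Lemma einv_gt0 n : 0 < einv R n.
Proof. by rewrite /einv invr_gt0 ltr0Sn. Qed.

Lemma proj_ex (S : set X) x s0 : closed S -> convex_set S -> S s0 ->
  exists p, S p /\ forall s, S s -> `|x - p| <= `|x - s|.
Proof.
move=> clS cvS Ss0.
pose E := [set c | exists s, S s /\ c = `|x - s| ^+ 2].
have E0 : E !=set0 by exists (`|x - s0| ^+ 2); exists s0.
have Elb : has_lbound E by exists 0 => c [s [_ ->]]; exact: exprn_ge0.
have Einf : has_inf E by split.
pose m := inf E.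
have H : forall n, exists s, S s /\ `|x - s| ^+ 2 <= m + einv R n.
  move=> n; have [c [s [Ss ->]] hc] := inf_adherent (einv_gt0 n) Einf.
  by exists s; split => //; exact: ltW.
have [s Hs] := choice H.
have mle : forall s, S s -> m <= `|x - s| ^+ 2.
  by move=> s' Ss'; apply: ge_inf => //; exists s'.
have hc : cvg (s @ \oo).
  apply: (cauchy_seq _ 2) => // n k.
  have [Sn hn] := Hs n; have [Sk hk] := Hs k.
  have h2 : (0 : R) <= 2^-1 by rewrite invr_ge0.
  have h21 : (2 : R)^-1 <= 1 by rewrite invf_le1 // ler1n.
  have hmid := mle _ (cvS (s n) (s k) (2^-1) Sn Sk h2 h21).
  move: hn hk hmid; rewrite -!ipn !ipE.
  rewrite (ipC (s n) x) (ipC (s k) x) (ipC (s k) (s n)).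
  move=> hn hk hmid.
  have en := einv_gt0 n; have ek := einv_gt0 k.
  lra.
set p := lim (s @ \oo) in hc.
have Sp : S p.
  apply: (closed_cvg _ clS _ _ hc); apply: nearW => n; exact: (Hs n).1.
have hp : `|x - p| ^+ 2 <= m.
  apply: (lim_le_inv (fun n => `|x - s n| ^+ 2)); last by move=> n; exact: (Hs n).2.
  apply: norm2_cvg; apply: cvgB => //; exact: cvg_cst.
exists p; split => // s' Ss'.
have := mle _ Ss'; move: hp.
have a := normr_ge0 (x - p); have b := normr_ge0 (x - s').
move: a b; set u := `|x - p|; set w := `|x - s'|; move=> a b h1 h2.
rewrite leNgt; apply/negP => h3; nra.
Qed.

Lemma proj_char (S : set X) x s0 : closed S -> convex_set S -> S s0 ->
  S (proj_on S x) /\ forall s, S s -> ip (x - proj_on S x) (s - proj_on S x) <= 0.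
Proof.
move=> clS cvS Ss0.
have [p0 hp0] := proj_ex S x s0 clS cvS Ss0.
have [Sp Hp] : S (proj_on S x) /\ forall s, S s -> `|x - proj_on S x| <= `|x - s|.
  exact: (@xgetPex X x [set p | S p /\ forall s, S s -> `|x - p| <= `|x - s|] (ex_intro _ p0 hp0)).
set p := proj_on S x in Sp Hp *; split => // s Ss.
have H : forall t, 0 < t -> t <= 1 -> 0 <= - 2 * ip (x - p) (s - p) + t * ip (s - p) (s - p).
  move=> t t0 t1.
  have t0' : 0 <= t by exact: ltW.
  have := Hp _ (cvS s p t Ss Sp t0' t1).
  have a := normr_ge0 (x - p).
  have b := normr_ge0 (x - (t *: s + (1 - t) *: p)).
  move: a b; set u := `|x - p|; set w := `|x - _|; move=> a b h1.
  have h2 : u ^+ 2 <= w ^+ 2 by nra.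
  move: h2; rewrite /u /w -!ipn !ipE (ipC s x) (ipC p x) (ipC p s) => h2.
  rewrite -(pmulr_rge0 _ t0).
  set A := ip x x in h2 *; set B := ip x s in h2 *; set C := ip x p in h2 *.
  set D := ip s s in h2 *; set E := ip s p in h2 *; set F := ip p p in h2 *.
  nra.
have := small_t _ _ H; lra.
Qed.

Lemma char_unique (S : set X) x p q : S p -> S q ->
  (forall s, S s -> ip (x - p) (s - p) <= 0) ->
  (forall s, S s -> ip (x - q) (s - q) <= 0) -> p = q.
Proof.
move=> Sp Sq Hp Hq.
have h1 := Hp _ Sq; have h2 := Hq _ Sp.
have : ip (p - q) (p - q) <= 0.
  move: h1 h2; rewrite !ipE ?(ipC q x) ?(ipC p x) ?(ipC q p); lra.
rewrite ipn => h; apply/eqP; rewrite -subr_eq0 -normr_eq0.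
have := normr_ge0 (p - q); move: h; set u := `|p - q|; move=> g1 g2.
apply/eqP; nra.
Qed.



Lemma maxmono_rel (A : X -> set X) p q : maximally_monotone ip A ->
  (forall y v, A y v -> 0 <= ip (p - y) (q - v)) -> A p q.
Proof.
move=> [mA maxA] H.
pose B y v := A y v \/ (y = p /\ v = q).
have mB : monotone_op ip B.
  move=> x y u v [hx|[-> ->]] [hy|[-> ->]].
  - exact: mA.
  - have := H _ _ hx; rewrite !ipE; lra.
  - exact: H.
  - by rewrite !subrr ip0l.
have sB : op_graph A `<=` op_graph B by move=> [y v] /= h; left.
have E := maxA B mB sB.
have : op_graph B (p, q) by right.
by rewrite E.
Qed.

Lemma maxmono_tr (A : X -> set X) (c : X) (k : R) : 0 < k -> maximally_monotone ip A ->
  maximally_monotone ip (fun q w => A (q + c) (k *: w)).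
Proof.
move=> k0 HA; have [mA _] := HA; split.
  move=> x y u v hx hy; have := mA _ _ _ _ hx hy.
  have -> : ip (x + c - (y + c)) (k *: u - k *: v) = k * ip (x - y) (u - v).
    by rewrite !ipE; ring.
  by rewrite pmulr_rge0.
move=> B mB sB; apply/seteqP; split => [[q w] /= h|]; last first.
  by move=> [q w] /= h; apply: sB.
apply: maxmono_rel => // y v hy.
have hB : B (y - c) (k^-1 *: v).
  apply: (sB (y - c, k^-1 *: v)) => /=.
  rewrite /op_graph /=. by rewrite addrNK scalerA divff ?gt_eqF // scale1r.
have := mB _ _ _ _ h hB.
have -> : ip (q + c - y) (k *: w - v) = k * ip (q - (y - c)) (w - k^-1 *: v).
  rewrite !ipE; field; by rewrite gt_eqF.
by rewrite pmulr_rge0.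
Qed.

Lemma maxmono_inv (A : X -> set X) : maximally_monotone ip A ->
  maximally_monotone ip (fun y x => A x y).
Proof.
move=> HA; have [mA _] := HA; split.
  by move=> x y u v hx hy; rewrite ipC; exact: mA.
move=> B mB sB; apply/seteqP; split => [[q w] /= h|]; last first.
  by move=> [q w] /= h; apply: sB.
apply: maxmono_rel => // y v hy.
have hB : B v y by apply: (sB (v, y)).
by rewrite ipC; apply: mB.
Qed.


Section Minty.



Variable A : X -> set X.
Hypothesis HA : maximally_monotone ip A.

Let ell y v x u := ip x v + ip y u - ip y v.

Lemma Fq x u c : (forall y v, A y v -> ell y v x u <= c) -> ip x u <= c.
Proof.
move=> H; rewrite leNgt; apply/negP => hc.
have hA : A x u.
  apply: maxmono_rel => // y v hy; have := H _ _ hy; rewrite /ell !ipE; lra.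
by have := H _ _ hA; rewrite /ell; lra.
Qed.

Lemma graph_ne : exists y v, A y v.
Proof.
case: (pselect (exists y v, A y v)) => [h|hn]; first exact: h.
exfalso; apply hn.
exists 0, 0; apply: maxmono_rel => // y v hy; exfalso; apply: hn; by exists y, v.
Qed.

Lemma minty0 : exists p, A p (- p).
Proof.
have [mA _] := HA.
pose Phi := [set c | exists x u, forall y v, A y v -> ell y v x u + (ip x x + ip u u) / 2 <= c].
have [y0 [v0 hy0]] := graph_ne.
have P0 : Phi !=set0.
  exists (ip y0 v0 + (ip y0 y0 + ip v0 v0) / 2); exists y0, v0 => y v hy.
  have := mA _ _ _ _ hy0 hy; rewrite /ell !ipE; lra.
have Plb : has_lbound Phi.
  exists 0 => c [x [u Hxu]].
  have h2 : ip x u <= c - (ip x x + ip u u) / 2.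
    by apply: Fq => y v hy; have := Hxu _ _ hy; lra.
  have h1 : 0 <= ip (x + u) (x + u) by rewrite ipn exprn_ge0.
  move: h1; rewrite !ipE (ipC u x); lra.
have Pinf : has_inf Phi by split.
pose m := inf Phi.
have mle : forall x u c, (forall y v, A y v -> ell y v x u + (ip x x + ip u u) / 2 <= c) -> m <= c.
  by move=> x u c H; apply: ge_inf => //; exists x, u.
have Hn : forall n, exists z : X * X, forall y v, A y v ->
    ell y v z.1 z.2 + (ip z.1 z.1 + ip z.2 z.2) / 2 <= m + einv R n.
  move=> n; have [c [x [u H]] hc] := inf_adherent (einv_gt0 n) Pinf.
  by exists (x, u) => y v hy /=; have := H _ _ hy; lra.
have [z Hz] := choice Hn.
pose xs n := (z n).1; pose us n := (z n).2.
have hcau : forall n k, ip (xs n - xs k) (xs n - xs k) + ip (us n - us k) (us n - us k)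
    <= 4 * (einv R n + einv R k).
  move=> n k.
  have key : forall y v, A y v ->
     ell y v (2^-1 *: (xs n + xs k)) (2^-1 *: (us n + us k)) +
     (ip (2^-1 *: (xs n + xs k)) (2^-1 *: (xs n + xs k)) + ip (2^-1 *: (us n + us k)) (2^-1 *: (us n + us k))) / 2
     <= (m + einv R n + (m + einv R k)) / 2 -
        (ip (xs n - xs k) (xs n - xs k) + ip (us n - us k) (us n - us k)) / 8.
    move=> y v hy; have := Hz n y v hy; have := Hz k y v hy.
    rewrite /ell /xs /us !ipE (ipC (z k).1 (z n).1) (ipC (z k).2 (z n).2); lra.
  have := mle _ _ _ key; lra.
have cx : cvg (xs @ \oo).
  apply: (cauchy_seq _ 4) => // n k; rewrite -ipn.
  have := hcau n k; have : 0 <= ip (us n - us k) (us n - us k) by rewrite ipn exprn_ge0.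
  lra.
have cu : cvg (us @ \oo).
  apply: (cauchy_seq _ 4) => // n k; rewrite -ipn.
  have := hcau n k; have : 0 <= ip (xs n - xs k) (xs n - xs k) by rewrite ipn exprn_ge0.
  lra.
set xb := lim (xs @ \oo) in cx; set ub := lim (us @ \oo) in cu.
have hlim : forall y v, A y v -> ell y v xb ub + (ip xb xb + ip ub ub) / 2 <= m.
  move=> y v hy.
  apply: (lim_le_inv (fun n => ell y v (xs n) (us n) + (ip (xs n) (xs n) + ip (us n) (us n)) / 2));
    last by move=> n; exact: (Hz n y v hy).
  rewrite /ell; apply: cvgD.
    apply: cvgB; last exact: cvg_cst.
    apply: cvgD; [exact: ip_cvgl | exact: ip_cvgr].
  apply: cvgMr_tmp; apply: cvgD.
    rewrite ipn; under eq_fun => n do rewrite ipn; exact: norm2_cvg.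
  rewrite ipn; under eq_fun => n do rewrite ipn; exact: norm2_cvg.
pose Fb := m - (ip xb xb + ip ub ub) / 2.
have hF : forall y v, A y v -> ell y v xb ub <= Fb.
  by move=> y v hy; have := hlim _ _ hy; rewrite /Fb; lra.
have hq := Fq xb ub Fb hF.
have key2 : forall y v, A y v -> ip (xb + ub) (xb + ub) <= ip (- ub - y) (- xb - v).
  move=> y v hy.
  pose a := ip y v - Fb + ip xb (y - xb) + ip ub (v - ub).
  pose b := (ip (y - xb) (y - xb) + ip (v - ub) (v - ub)) / 2.
  have H : forall t, 0 < t -> t <= 1 -> 0 <= a + t * b.
    move=> t t0 t1.
    pose xt := xb + t *: (y - xb); pose ut := ub + t *: (v - ub).
    have hct : forall y' v', A y' v' -> ell y' v' xt ut + (ip xt xt + ip ut ut) / 2 <=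
        (1 - t) * Fb + t * ip y v + (ip xt xt + ip ut ut) / 2.
      move=> y' v' hy'.
      have h1 := hF _ _ hy'.
      have h2 : ell y' v' y v <= ip y v.
        have := mA _ _ _ _ hy hy'; rewrite /ell !ipE; lra.
      have -> : ell y' v' xt ut = (1 - t) * ell y' v' xb ub + t * ell y' v' y v.
        by rewrite /ell /xt /ut !ipE; ring.
      have h3 : (1 - t) * ell y' v' xb ub <= (1 - t) * Fb by apply: ler_wpM2l => //; lra.
      have h4 : t * ell y' v' y v <= t * ip y v by apply: ler_wpM2l => //; lra.
      lra.
    have := mle _ _ _ hct.
    have -> : (1 - t) * Fb + t * ip y v + (ip xt xt + ip ut ut) / 2 =
              m + t * (a + t * b).
      rewrite /a /b /xt /ut /Fb !ipE.
      by rewrite ?(ipC y xb) ?(ipC v ub); field.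
    move=> h; rewrite -(pmulr_rge0 _ t0); lra.
  have ha := small_t _ _ H.
  move: ha hq; rewrite /a /Fb !ipE ?(ipC ub xb) ?(ipC y xb) ?(ipC v ub) ?(ipC y ub) ?(ipC v xb) ?(ipC ub y) ?(ipC xb v).
  move=> *; lra.
have hmax : A (- ub) (- xb).
  apply: maxmono_rel => // y v hy; have := key2 _ _ hy.
  have : 0 <= ip (xb + ub) (xb + ub) by rewrite ipn exprn_ge0.
  lra.
have := key2 _ _ hmax; rewrite !subrr ip0l ipn => h.
have h0 : `|xb + ub| = 0.
  apply/le_anti; rewrite normr_ge0 andbT.
  have := normr_ge0 (xb + ub); move: h; set w := `|xb + ub|; move=> g1 g2; nra.
move: h0 => /eqP; rewrite normr_eq0 addr_eq0 => /eqP hub.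
exists xb; move: hmax; by rewrite hub opprK.
Qed.

End Minty.



Lemma resolvent_ex (A : X -> set X) (l : R) x : maximally_monotone ip A -> 0 < l ->
  exists p u, A p u /\ x = p + l *: u.
Proof.
move=> HA l0.
have l1 : 0 < l^-1 by rewrite invr_gt0.
have [q hq] := minty0 _ (maxmono_tr A x (l^-1) l1 HA).
exists (q + x), (l^-1 *: - q); split => //.
by rewrite scalerA divff ?gt_eqF // scale1r addrAC subrr add0r.
Qed.

Lemma cl_approx (S : set X) z : (forall e, 0 < e -> exists s, closure S s /\ `|z - s| < e) ->
  closure S z.
Proof.
move=> H; apply/closureN => e e0.
have e2 : 0 < e / 2 by apply: divr_gt0.
have [s [/closureN Ss hs]] := H _ e2.
have [s' [Ss' hs']] := Ss _ e2.
exists s'; split => //; have := ler_distD s z s'; lra.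
Qed.

Lemma cl_trans (S : set X) w : (forall s, S s -> closure S (s + w)) ->
  forall z, closure S z -> closure S (z + w).
Proof.
move=> H z /closureN hz; apply: cl_approx => e e0.
have [s [Ss hs]] := hz _ e0; exists (s + w); split; first exact: H.
by rewrite opprD addrACA subrr addr0.
Qed.

Lemma dom_conv (A : X -> set X) a b (t : R) : maximally_monotone ip A ->
  op_dom A a -> op_dom A b -> 0 <= t -> t <= 1 ->
  closure (op_dom A) (t *: a + (1 - t) *: b).
Proof.
move=> HA [va ha] [vb hb] t0 t1; have [mA _] := HA.
set mm := t *: a + (1 - t) *: b.
apply/closureN => e e0.
have K1 : 0 <= `|va| + `|vb| by rewrite addr_ge0.
have K2 : 0 <= `|mm - a| * `|va| + `|mm - b| * `|vb| by rewrite addr_ge0 // mulr_ge0.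
have [l l0 Hl] := small_lambda _ _ _ K1 K2 e0.
have [xi [eta [hxi hm]]] := resolvent_ex A l mm HA l0.
exists xi; split; first by exists eta.
apply: Hl => //.
set s := `|mm - xi|.
have f1 : ip (xi - a) va <= ip (xi - a) eta.
  have := mA _ _ _ _ hxi ha; rewrite !ipE; lra.
have f2 : ip (xi - b) vb <= ip (xi - b) eta.
  have := mA _ _ _ _ hxi hb; rewrite !ipE; lra.
have f3 : t * ip (xi - a) eta + (1 - t) * ip (xi - b) eta = - l * ip eta eta.
  have -> : t * ip (xi - a) eta + (1 - t) * ip (xi - b) eta = ip (xi - mm) eta.
    by rewrite /mm !ipE; ring.
  by rewrite hm !ipE; ring.
have f4 : - (`|xi - a| * `|va|) <= ip (xi - a) va.
  have := CS (xi - a) va; rewrite ler_norml => /andP[h _]; exact: h.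
have f5 : - (`|xi - b| * `|vb|) <= ip (xi - b) vb.
  have := CS (xi - b) vb; rewrite ler_norml => /andP[h _]; exact: h.
have f6 : `|xi - a| <= s + `|mm - a| by rewrite /s (distrC mm xi); exact: ler_distD.
have f6' : `|xi - b| <= s + `|mm - b| by rewrite /s (distrC mm xi); exact: ler_distD.
have f7 : s = l * `|eta|.
  by rewrite /s hm addrAC subrr add0r normrZ gtr0_norm.
have f8 : ip eta eta = `|eta| ^+ 2 by rewrite ipn.
have g2 : t * ip (xi - a) va + (1 - t) * ip (xi - b) vb <= - l * ip eta eta.
  rewrite -f3; apply: lerD; apply: ler_wpM2l => //; lra.
have P1 : 0 <= `|xi - a| * `|va| by rewrite mulr_ge0.
have P2 : 0 <= `|xi - b| * `|vb| by rewrite mulr_ge0.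
have g3 : - (`|xi - a| * `|va| + `|xi - b| * `|vb|) <= t * ip (xi - a) va + (1 - t) * ip (xi - b) vb.
  have h1 : t * (- (`|xi - a| * `|va|)) <= t * ip (xi - a) va by apply: ler_wpM2l.
  have h2 : (1 - t) * (- (`|xi - b| * `|vb|)) <= (1 - t) * ip (xi - b) vb by apply: ler_wpM2l => //; lra.
  nra.
have g4 : `|xi - a| * `|va| <= (s + `|mm - a|) * `|va| by apply: ler_wpM2r.
have g5 : `|xi - b| * `|vb| <= (s + `|mm - b|) * `|vb| by apply: ler_wpM2r.
have g6 : l * ip eta eta <= (`|va| + `|vb|) * s + (`|mm - a| * `|va| + `|mm - b| * `|vb|) by lra.
have -> : s ^+ 2 = l * (l * ip eta eta) by rewrite f7 f8; ring.
apply: ler_wpM2l; [exact: ltW | lra].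
Qed.

Lemma normal_rec (A : X -> set X) w p : maximally_monotone ip A ->
  (forall z, op_ran A z -> ip w (z - p) <= 0) -> rec_cone (closure (op_dom A)) w.
Proof.
move=> HA Hn; have [mA _] := HA.
apply: cl_trans => x [y0 hy0].
apply/closureN => e e0.
set K := ip w (p - y0).
have K1 : 0 <= `|y0| by [].
have K2 : 0 <= `|K| by [].
have [l l0 Hl] := small_lambda _ _ _ K1 K2 e0.
have [xi [eta [hxi hm]]] := resolvent_ex A l (x + w) HA l0.
exists xi; split; first by exists eta.
apply: Hl => //.
set s := `|x + w - xi|.
have exi : xi = x + w - l *: eta by rewrite hm addrK.
have f1 : 0 <= ip (xi - x) (eta - y0) by exact: mA.
have f2 : ip w (eta - p) <= 0 by apply: Hn; exists xi.
have f3 : ip eta y0 <= `|eta| * `|y0| by exact: ip_le_norm.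
have f4 : K <= `|K| by exact: ler_norm.
have f5 : l * ip eta eta <= K + l * ip eta y0.
  move: f1 f2; rewrite /K exi !ipE; lra.
have f7 : s = l * `|eta|.
  by rewrite /s hm addrAC subrr add0r normrZ gtr0_norm.
have f8 : ip eta eta = `|eta| ^+ 2 by rewrite ipn.
have g : l * ip eta eta <= `|y0| * s + `|K|.
  rewrite f7; have : l * ip eta y0 <= l * (`|eta| * `|y0|) by apply: ler_wpM2l => //; exact: ltW.
  lra.
have -> : s ^+ 2 = l * (l * ip eta eta) by rewrite f7 f8; ring.
apply: ler_wpM2l; [exact: ltW | lra].
Qed.



Lemma cl_conv (S : set X) : (forall a b (t : R), S a -> S b -> 0 <= t -> t <= 1 ->
  closure S (t *: a + (1 - t) *: b)) -> convex_set (closure S).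
Proof.
move=> H a b t /closureN ha /closureN hb t0 t1; apply: cl_approx => e e0.
have e2 : 0 < e / 2 by apply: divr_gt0.
have [a' [Sa' ha']] := ha _ e2; have [b' [Sb' hb']] := hb _ e2.
exists (t *: a' + (1 - t) *: b'); split; first exact: H.
have -> : t *: a + (1 - t) *: b - (t *: a' + (1 - t) *: b') = t *: (a - a') + (1 - t) *: (b - b').
  by rewrite !scalerBr opprD addrACA.
apply: (le_lt_trans (ler_normD _ _)); rewrite !normrZ (ger0_norm t0) ger0_norm; last lra.
have : t * `|a - a'| <= t * (e / 2) by apply: ler_wpM2l => //; exact: ltW.
have : (1 - t) * `|b - b'| <= (1 - t) * (e / 2) by apply: ler_wpM2l; [lra | exact: ltW].
lra.
Qed.

Lemma cl_diff (S T : set X) a b : closure S a -> closure T b -> closure (mink_diff S T) (a - b).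
Proof.
move=> /closureN ha /closureN hb; apply/closureN => e e0.
have e2 : 0 < e / 2 by apply: divr_gt0.
have [a' [Sa' ha']] := ha _ e2; have [b' [Sb' hb']] := hb _ e2.
exists (a' - b'); split; first by exists a', b'.
have -> : a - b - (a' - b') = (a - a') - (b - b') by rewrite !opprB addrACA [X in _ = X]addrACA [- a' + _]addrC.
have := ler_normB (a - a') (b - b'); lra.
Qed.

Lemma cl_sum (S T : set X) a b : closure S a -> closure T b -> closure (mink_sum S T) (a + b).
Proof.
move=> /closureN ha /closureN hb; apply/closureN => e e0.
have e2 : 0 < e / 2 by apply: divr_gt0.
have [a' [Sa' ha']] := ha _ e2; have [b' [Sb' hb']] := hb _ e2.
exists (a' + b'); split; first by exists a', b'.
have -> : a + b - (a' + b') = (a - a') + (b - b') by rewrite opprD addrACA.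
have := ler_normD (a - a') (b - b'); lra.
Qed.

Lemma conv_clD (A B : X -> set X) : maximally_monotone ip A -> maximally_monotone ip B ->
  convex_set (closure (mink_diff (op_dom A) (op_dom B))).
Proof.
move=> HA HB; apply: cl_conv => d1 d2 t [a1 [b1 [ha1 [hb1 ->]]]] [a2 [b2 [ha2 [hb2 ->]]]] t0 t1.
have -> : t *: (a1 - b1) + (1 - t) *: (a2 - b2) = (t *: a1 + (1 - t) *: a2) - (t *: b1 + (1 - t) *: b2).
  by rewrite !scalerBr addrACA opprD.
by apply: cl_diff; apply: dom_conv.
Qed.

Lemma conv_clR (A B : X -> set X) : maximally_monotone ip A -> maximally_monotone ip B ->
  convex_set (closure (mink_sum (op_ran A) (op_ran B))).
Proof.
move=> HA HB; apply: cl_conv => d1 d2 t [a1 [b1 [ha1 [hb1 ->]]]] [a2 [b2 [ha2 [hb2 ->]]]] t0 t1.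
have -> : t *: (a1 + b1) + (1 - t) *: (a2 + b2) = (t *: a1 + (1 - t) *: a2) + (t *: b1 + (1 - t) *: b2).
  by rewrite !scalerDr addrACA.
apply: cl_sum.
  exact: (dom_conv (fun y x => A x y) a1 a2 t (maxmono_inv _ HA) ha1 ha2 t0 t1).
exact: (dom_conv (fun y x => B x y) b1 b2 t (maxmono_inv _ HB) hb1 hb2 t0 t1).
Qed.

Lemma rec_iter (C : set X) d : rec_cone C d -> forall c, C c -> forall n : nat, C (c + n%:R *: d).
Proof.
move=> Hd c Cc; elim => [|n IH]; first by rewrite scale0r addr0.
by rewrite -[n.+1]addn1 natrD scalerDl scale1r addrA; apply: Hd.
Qed.

Lemma polar_neg (S : set X) : polar_cone ip (setneg S) = setneg (polar_cone ip S).
Proof.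
apply/seteqP; split => u /= H s hs.
  rewrite ipNl -ipNr; apply: H; by rewrite /setneg /= opprK.
by rewrite -[u]opprK ipNl -ipNr; apply: H.
Qed.

Lemma setnegI (S T : set X) : setneg S `&` setneg T = setneg (S `&` T).
Proof. by apply/seteqP; split => u. Qed.



Lemma main_thm (A B : X -> set X) :
  maximally_monotone ip A -> maximally_monotone ip B ->
  let D := mink_diff (op_dom A) (op_dom B) in
  let Rg := mink_sum (op_ran A) (op_ran B) in
  let vD := proj_on (closure D) 0 in
  let vR := proj_on (closure Rg) 0 in
  let rdA := rec_cone (closure (op_dom A)) in
  let rdB := rec_cone (closure (op_dom B)) in
  let rrA := rec_cone (closure (op_ran A)) in
  let rrB := rec_cone (closure (op_ran B)) in
  (polar_cone ip (setneg rdA) `&` polar_cone ip rdB) vD /\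
  polar_cone ip (setneg rdA) `&` polar_cone ip rdB
    = setneg (polar_cone ip rdA) `&` polar_cone ip rdB /\
  (setneg rrA `&` rrB) vD /\
  (polar_cone ip (setneg rrA) `&` polar_cone ip (setneg rrB)) vR /\
  polar_cone ip (setneg rrA) `&` polar_cone ip (setneg rrB)
    = setneg (polar_cone ip rrA `&` polar_cone ip rrB) /\
  (setneg rdA `&` setneg rdB) vR /\
  setneg rdA `&` setneg rdB = setneg (rdA `&` rdB) /\
  ip vD vR = 0 /\
  (closure D `&` closure Rg) (vD + vR) /\
  (let T := fun x => x - resolvent A x + resolvent B (reflected A x) in
   let ranIT := [set y | exists x, y = x - T x] in
   let v := proj_on (closure ranIT) 0 in
   closure ranIT = closure (D `&` Rg) ->
   closure (D `&` Rg) = closure D `&` closure Rg ->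
   v = vD + vR /\
   `|v| ^+ 2 = `|vD| ^+ 2 + `|vR| ^+ 2 /\
   `|vD| ^+ 2 + `|vR| ^+ 2 = pair_norm2 ip (vR, vD)).
Proof.
move=> HA HB D Rg vD vR rdA rdB rrA rrB.
have [a0 [a0' [ha0 _]]] := resolvent_ex A 1 0 HA ltr01.
have [b0 [b0' [hb0 _]]] := resolvent_ex B 1 0 HB ltr01.
have dA : op_dom A a0 by exists a0'.
have dB : op_dom B b0 by exists b0'.
have rA : op_ran A a0' by exists a0.
have rB : op_ran B b0' by exists b0.
have [vDin vDc] := proj_char (closure D) 0 (a0 - b0) (@closed_closure _ _) (conv_clD A B HA HB)
  (subset_closure (ex_intro _ a0 (ex_intro _ b0 (conj dA (conj dB erefl))))).
have [vRin vRc] := proj_char (closure Rg) 0 (a0' + b0') (@closed_closure _ _) (conv_clR A B HA HB)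
  (subset_closure (ex_intro _ a0' (ex_intro _ b0' (conj rA (conj rB erefl))))).
have vDc' : forall s, closure D s -> 0 <= ip vD (s - vD).
  by move=> s hs; have := vDc _ hs; rewrite sub0r ipNl; lra.
have vRc' : forall s, closure Rg s -> 0 <= ip vR (s - vR).
  by move=> s hs; have := vRc _ hs; rewrite sub0r ipNl; lra.
have clD : forall a b, closure (op_dom A) a -> closure (op_dom B) b -> closure D (a - b).
  by move=> a b ha hb; apply: cl_diff.
have clR : forall a b, closure (op_ran A) a -> closure (op_ran B) b -> closure Rg (a + b).
  by move=> a b ha hb; apply: cl_sum.
have sc : forall (S : set X) x, S x -> closure S x by move=> S x h; exact: subset_closure.
have i1 : polar_cone ip (setneg rdA) vD.
  move=> s hs; apply: (arch_le0 _ (ip vD a0 - ip vD b0 - ip vD vD)) => n.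
  have := vDc' _ (clD _ _ (rec_iter _ _ hs _ (sc _ _ dA) n) (sc _ _ dB)).
  rewrite !ipE; lra.
have i2 : polar_cone ip rdB vD.
  move=> s hs; apply: (arch_le0 _ (ip vD a0 - ip vD b0 - ip vD vD)) => n.
  have := vDc' _ (clD _ _ (sc _ _ dA) (rec_iter _ _ hs _ (sc _ _ dB) n)).
  rewrite !ipE; lra.
have ii1 : setneg rrA vD.
  apply: (normal_rec (fun y x => A x y) (- vD) (b0 + vD) (maxmono_inv _ HA)).
  move=> z hz; have := vDc' _ (sc _ _ (ex_intro _ z (ex_intro _ b0 (conj hz (conj dB erefl))))).
  rewrite !ipE; lra.
have ii2 : rrB vD.
  apply: (normal_rec (fun y x => B x y) vD (a0 - vD) (maxmono_inv _ HB)).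
  move=> z hz; have := vDc' _ (sc _ _ (ex_intro _ a0 (ex_intro _ z (conj dA (conj hz erefl))))).
  rewrite !ipE; lra.
have iii1 : polar_cone ip (setneg rrA) vR.
  move=> s hs; apply: (arch_le0 _ (ip vR a0' + ip vR b0' - ip vR vR)) => n.
  have := vRc' _ (clR _ _ (rec_iter _ _ hs _ (sc _ _ rA) n) (sc _ _ rB)).
  rewrite !ipE; lra.
have iii2 : polar_cone ip (setneg rrB) vR.
  move=> s hs; apply: (arch_le0 _ (ip vR a0' + ip vR b0' - ip vR vR)) => n.
  have := vRc' _ (clR _ _ (sc _ _ rA) (rec_iter _ _ hs _ (sc _ _ rB) n)).
  rewrite !ipE; lra.
have iv1 : setneg rdA vR.
  apply: (normal_rec A (- vR) (vR - b0') HA).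
  move=> z hz; have := vRc' _ (sc _ _ (ex_intro _ z (ex_intro _ b0' (conj hz (conj rB erefl))))).
  rewrite !ipE; lra.
have iv2 : setneg rdB vR.
  apply: (normal_rec B (- vR) (vR - a0') HB).
  move=> z hz; have := vRc' _ (sc _ _ (ex_intro _ a0' (ex_intro _ z (conj rA (conj hz erefl))))).
  rewrite !ipE; lra.
have v0 : ip vD vR = 0.
  have h1 := iii1 _ ii1.
  have h2 : ip vR (- vD) <= 0 by apply: iii2; rewrite /setneg /= opprK.
  move: h2; rewrite ipNr (ipC vR vD) => h2; move: h1; rewrite (ipC vR vD); lra.
have vi1 : closure D (vD + vR).
  apply: cl_trans vDin => s [a [b [ha [hb ->]]]].
  have -> : a - b + vR = a - (b + - vR) by rewrite opprD opprK addrA.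
  apply: clD; first exact: sc.
  exact: iv2 _ (sc _ _ hb).
have vi2 : closure Rg (vD + vR).
  rewrite addrC; apply: cl_trans vRin => s [a [b [ha [hb ->]]]].
  rewrite -addrA; apply: clR; first exact: sc.
  exact: ii2 _ (sc _ _ hb).
split; first by split.
split; first by rewrite polar_neg.
split; first by split.
split; first by split.
split; first by rewrite !polar_neg setnegI.
split; first by split.
split; first by rewrite setnegI.
split; first exact: v0.
split; first by split.
move=> T ranIT v H1 H2.
have hv : v = proj_on (closure D `&` closure Rg) 0 by rewrite /v H1 H2.
have clS : closed (closure D `&` closure Rg) by apply: closedI; exact: closed_closure.
have cvS : convex_set (closure D `&` closure Rg).
  move=> a b t [ha1 ha2] [hb1 hb2] t0 t1; split.
    exact: (conv_clD A B HA HB).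
  exact: (conv_clR A B HA HB).
have [pin pc] := proj_char _ 0 (vD + vR) clS cvS (conj vi1 vi2).
have hc : forall s, (closure D `&` closure Rg) s -> ip (0 - (vD + vR)) (s - (vD + vR)) <= 0.
  move=> s [hs1 hs2]; have := vDc' _ hs1; have := vRc' _ hs2.
  rewrite !ipE (ipC vR vD) v0; lra.
have ev : v = vD + vR.
  rewrite hv; exact: (char_unique _ _ _ _ pin (conj vi1 vi2) pc hc).
have n2 : `|v| ^+ 2 = `|vD| ^+ 2 + `|vR| ^+ 2.
  by rewrite ev -!ipn !ipE (ipC vR vD) v0; lra.
split => //; split => //.
by rewrite /pair_norm2 /= -!ipn addrC.
Qed.


End All.

Theorem proposition3p3 (R : realType) (X : completeNormedModType R)
  (ip : X -> X -> R) (A B : X -> set X) :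
  is_inner_product ip ->
  maximally_monotone ip A -> maximally_monotone ip B ->
  let D := mink_diff (op_dom A) (op_dom B) in
  let Rg := mink_sum (op_ran A) (op_ran B) in
  let vD := proj_on (closure D) 0 in
  let vR := proj_on (closure Rg) 0 in
  let rdA := rec_cone (closure (op_dom A)) in
  let rdB := rec_cone (closure (op_dom B)) in
  let rrA := rec_cone (closure (op_ran A)) in
  let rrB := rec_cone (closure (op_ran B)) in
  (* (i) *)
  (polar_cone ip (setneg rdA) `&` polar_cone ip rdB) vD /\
  polar_cone ip (setneg rdA) `&` polar_cone ip rdB
    = setneg (polar_cone ip rdA) `&` polar_cone ip rdB /\
  (* (ii) *)
  (setneg rrA `&` rrB) vD /\
  (* (iii) *)
  (polar_cone ip (setneg rrA) `&` polar_cone ip (setneg rrB)) vR /\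
  polar_cone ip (setneg rrA) `&` polar_cone ip (setneg rrB)
    = setneg (polar_cone ip rrA `&` polar_cone ip rrB) /\
  (* (iv) *)
  (setneg rdA `&` setneg rdB) vR /\
  setneg rdA `&` setneg rdB = setneg (rdA `&` rdB) /\
  (* (v) *)
  ip vD vR = 0 /\
  (* (vi) *)
  (closure D `&` closure Rg) (vD + vR) /\
  (* moreover *)
  (let T := fun x => x - resolvent A x + resolvent B (reflected A x) in
   let ranIT := [set y | exists x, y = x - T x] in
   let v := proj_on (closure ranIT) 0 in
   closure ranIT = closure (D `&` Rg) ->
   closure (D `&` Rg) = closure D `&` closure Rg ->
   (* (vii) *)
   v = vD + vR /\
   (* (viii) *)
   `|v| ^+ 2 = `|vD| ^+ 2 + `|vR| ^+ 2 /\
   `|vD| ^+ 2 + `|vR| ^+ 2 = pair_norm2 ip (vR, vD)).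
Proof.
move=> Hip; exact: (@main_thm R X ip Hip A B).
Qed.
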